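(* Let $T>0$ and constants $K_1\ge0$, $K_2\ne0$ with $K_1+K_2\ge0$; put $\beta=K_1/K_2$ and, for $t\in[0,T]$, $$\Lambda(t,T)=1+\frac{K_1}{K_2}\Big(1-e^{-\frac{K_2(T-t)}{2}}\Big)+\frac{K_1}{K_2}\Big(1-e^{-\frac{K_2t}{2}}\Big)+\Big(\frac{K_1}{K_2}\Big)^2\Big[\Big(1-e^{-\frac{K_2t}{2}}\Big)+\frac12\Big(e^{-\frac{K_2(T+t)}{2}}-e^{-\frac{K_2(T-t)}{2}}\Big)\Big].$$ (i) If $K_2>0$, then, writing $S=\sqrt{1+\frac{\beta}{2+\beta}\big(1-e^{-\frac{K_2T}{2}}\big)}$, $$\sup_{t\in[0,T]}\Lambda(t,T)=(1+\beta)^2-\Big(\beta+\frac{\beta^2}{2}\Big)S\,e^{-\frac{K_2T}{4}}-\frac{\beta+\beta^2-\frac{\beta^2}{2}e^{-\frac{K_2T}{2}}}{S}\,e^{-\frac{K_2T}{4}}.$$ (ii) If $K_2<0$, then $$\sup_{t\in[0,T]}\Lambda(t,T)=\frac12+\frac12\Big(1+\frac{K_1}{K_2}\Big[1-e^{-\frac{K_2T}{2}}\Big]\Big)^2.$$ *)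

(* Defs.v *)
From Stdlib Require Import Reals.
Open Scope R_scope.

Definition Lambda (K1 K2 T t : R) : R :=
  1 + (K1 / K2) * (1 - exp (- (K2 * (T - t) / 2)))
    + (K1 / K2) * (1 - exp (- (K2 * t / 2)))
    + (K1 / K2) ^ 2 *
      ((1 - exp (- (K2 * t / 2)))
       + / 2 * (exp (- (K2 * (T + t) / 2)) - exp (- (K2 * (T - t) / 2)))).

Definition Lambda_range (K1 K2 T : R) : R -> Prop :=
  fun y => exists t, 0 <= t <= T /\ y = Lambda K1 K2 T t.

(* Main.v *)
Require Import Defs.
From Stdlib Require Import Reals Lra Psatz.
Open Scope R_scope.

Lemma Rdiv_le_0_compat a b : 0 <= a -> 0 < b -> 0 <= a / b.
Proof. intros. unfold Rdiv. apply Rmult_le_pos; [lra| left; apply Rinv_0_lt_compat; lra]. Qed.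

Lemma exp_mono u v : u <= v -> exp u <= exp v.
Proof. intros [H|H]; [left; apply exp_increasing; auto | subst; lra]. Qed.

Lemma exp_mono_inv u v : exp u <= exp v -> u <= v.
Proof. intros H. destruct (Rle_or_lt u v) as [|H']; auto.
  apply exp_increasing in H'. lra. Qed.

Lemma Lam_eq K1 K2 T t (hK2 : K2 <> 0) :
  Lambda K1 K2 T t =
  (1 + K1 / K2) ^ 2 - (K1 / K2 + (K1 / K2) ^ 2 - (K1 / K2) ^ 2 / 2 * exp (- (K2 * T / 2))) * exp (- (K2 * t / 2))
   - exp (- (K2 * T / 2)) * (K1 / K2 + (K1 / K2) ^ 2 / 2) / exp (- (K2 * t / 2)).
Proof.
  assert (E1 : exp (- (K2 * (T - t) / 2)) = exp (- (K2 * T / 2)) / exp (- (K2 * t / 2))).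
  { replace (- (K2 * (T - t) / 2)) with (- (K2 * T / 2) + - (- (K2 * t / 2))) by field.
    rewrite exp_plus, (exp_Ropp (- (K2 * t / 2))). reflexivity. }
  assert (E2 : exp (- (K2 * (T + t) / 2)) = exp (- (K2 * T / 2)) * exp (- (K2 * t / 2))).
  { replace (- (K2 * (T + t) / 2)) with (- (K2 * T / 2) + - (K2 * t / 2)) by field.
    rewrite exp_plus. reflexivity. }
  assert (Hx : 0 < exp (- (K2 * t / 2))) by apply exp_pos.
  unfold Lambda. rewrite E1, E2. field. split; [exact hK2| lra].
Qed.

Theorem proposition2 (T K1 K2 : R) (hT : 0 < T) (hK1 : 0 <= K1)
  (hK2 : K2 <> 0) (hK12 : 0 <= K1 + K2) :
  let beta := K1 / K2 in
  (0 < K2 ->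
   let S := sqrt (1 + beta / (2 + beta) * (1 - exp (- (K2 * T / 2)))) in
   is_lub (Lambda_range K1 K2 T)
     ((1 + beta) ^ 2
      - (beta + beta ^ 2 / 2) * S * exp (- (K2 * T / 4))
      - (beta + beta ^ 2 - beta ^ 2 / 2 * exp (- (K2 * T / 2))) / S
        * exp (- (K2 * T / 4)))) /\
  (K2 < 0 ->
   is_lub (Lambda_range K1 K2 T)
     (/ 2 + / 2 * (1 + K1 / K2 * (1 - exp (- (K2 * T / 2)))) ^ 2)).
Proof.
  intros beta.
  set (a := exp (- (K2 * T / 2))).
  set (r := exp (- (K2 * T / 4))).
  assert (Ha : a = r * r).
  { unfold a, r. rewrite <- exp_plus. f_equal. field. }
  assert (Hr : 0 < r) by apply exp_pos.
  split.
  - intros HK2 S.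
    assert (Hb : 0 <= beta) by (unfold beta; apply Rdiv_le_0_compat; lra).
    assert (Hr1 : r <= 1).
    { unfold r. rewrite <- exp_0. apply exp_mono. 
      assert (0 < K2 * T) by (apply Rmult_lt_0_compat; lra). lra. }
    set (q := 1 + beta / (2 + beta) * (1 - a)).
    assert (Hq1 : 1 <= q).
    { unfold q. assert (0 <= beta / (2 + beta)) by (apply Rdiv_le_0_compat; lra).
      assert (0 <= 1 - a) by nra. nra. }
    assert (HS2 : S * S = q) by (apply sqrt_sqrt; lra).
    assert (HS1 : 1 <= S).
    { destruct (Rle_or_lt 1 S); auto.
      assert (0 <= S) by apply sqrt_pos. nra. }
    assert (HA : beta + beta ^ 2 - beta ^ 2 / 2 * a = (beta + beta ^ 2 / 2) * q).
    { unfold q. field; repeat split; intro; nra. }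
    rewrite HA.
    set (c := beta + beta ^ 2 / 2).
    assert (Hc : 0 <= c) by (unfold c; nra).
    assert (HM : (1 + beta) ^ 2 - c * S * r - c * q / S * r
                 = (1 + beta) ^ 2 - 2 * c * S * r).
    { rewrite <- HS2. field; repeat split; intro; nra. }
    rewrite HM.
    split.
    + intros y [t [Ht ->]]. rewrite (Lam_eq _ _ _ _ hK2). fold beta a.
      set (x := exp (- (K2 * t / 2))).
      assert (Hx : 0 < x) by apply exp_pos.
      rewrite HA. fold c.
      assert (Hkey : c * q * x + a * c / x - 2 * c * S * r = c * (S * x - r) ^ 2 / x).
      { rewrite <- HS2, Ha. field; repeat split; intro; nra. }
      assert (0 <= c * (S * x - r) ^ 2 / x).
      { apply Rdiv_le_0_compat; [apply Rmult_le_pos; [lra| apply pow2_ge_0] | lra]. }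
      lra.
    + intros b Hub. apply Hub.
      set (t := -2 * ln (r / S) / K2).
      assert (HrS : 0 < r / S) by (apply Rdiv_lt_0_compat; lra).
      assert (Ex : exp (- (K2 * t / 2)) = r / S).
      { replace (- (K2 * t / 2)) with (ln (r / S)) by (unfold t; field; lra).
        apply exp_ln; auto. }
      exists t. split.
      * split.
        -- assert (ln (r / S) <= 0).
           { apply exp_mono_inv. rewrite exp_ln, exp_0 by auto.
             apply (Rmult_le_reg_r S); [lra|]. field_simplify; lra. }
           unfold t. apply Rmult_le_reg_r with K2; auto.
           field_simplify; lra.
        -- assert (- (K2 * T / 2) <= - (K2 * t / 2)).
           { apply exp_mono_inv. rewrite Ex. fold a.
             assert (Hqa : q * a <= 1).
             { unfold q. assert (beta / (2 + beta) <= 1).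
               { apply (Rmult_le_reg_r (2+beta)); [lra|]. field_simplify; lra. }
               assert (0 <= beta / (2 + beta)) by (apply Rdiv_le_0_compat; lra).
               assert (0 <= a) by nra. assert (a <= 1) by nra.
               assert (0 <= (1 - beta / (2 + beta)) * ((1 - a) * a)) by (apply Rmult_le_pos; nra). nra. }
             rewrite Ha in Hqa |- *. rewrite <- HS2 in Hqa.
             apply (Rmult_le_reg_r S); [lra|]. field_simplify; [|lra].
             assert (S * r <= 1) by nra. nra. }
           apply Rmult_le_reg_r with K2; auto. lra.
      * rewrite (Lam_eq _ _ _ _ hK2). fold beta a. rewrite Ex, HA. fold c.
        rewrite <- HS2, Ha. field; repeat split; intro; nra.
  - intros HK2.
    assert (Hb : beta <= -1).
    { assert (beta * K2 = K1) by (unfold beta; field; lra). nra. }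
    assert (Ha1 : 1 <= a).
    { unfold a. rewrite <- exp_0. apply exp_mono.
      assert (K2 * T < 0) by nra. lra. }
    assert (HM : / 2 + / 2 * (1 + K1 / K2 * (1 - a)) ^ 2 =
       (1 + beta) ^ 2 - (beta + beta ^ 2 - beta ^ 2 / 2 * a) * a - a * (beta + beta ^ 2 / 2) / a).
    { fold beta. field; repeat split; intro; nra. }
    rewrite HM.
    split.
    + intros y [t [Ht ->]]. rewrite (Lam_eq _ _ _ _ hK2). fold beta a.
      set (x := exp (- (K2 * t / 2))).
      assert (Hx1 : 1 <= x).
      { unfold x. rewrite <- exp_0. apply exp_mono. nra. }
      assert (Hxa : x <= a).
      { unfold x, a. apply exp_mono. nra. }
      set (c := beta + beta ^ 2 / 2).
      set (A := beta + beta ^ 2 - beta ^ 2 / 2 * a).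
      assert (H1 : 0 <= c - A) by (unfold c, A; nra).
      assert (H2 : 0 <= c - A * a).
      { replace (c - A * a) with (beta * (1 - a) * (1 + beta * (1 - a) / 2))
          by (unfold c, A; field).
        assert (0 <= beta * (1 - a)) by nra. nra. }
      assert (H3 : 0 <= c - A * x).
      { assert (E : (a - 1) * (c - A * x) = (a - x) * (c - A) + (x - 1) * (c - A * a)) by field.
        destruct (Req_dec a 1) as [Ea|Ea].
        - replace x with a by lra. exact H2.
        - assert (0 <= (a - 1) * (c - A * x)) by (rewrite E; nra).
          apply (Rmult_le_reg_l (a - 1)); lra. }
      assert (Hkey : (1 + beta) ^ 2 - A * a - a * c / a - ((1 + beta) ^ 2 - A * x - a * c / x)
                     = (a - x) * (c - A * x) / x).
      { field; repeat split; intro; nra. }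
      assert (0 <= (a - x) * (c - A * x) / x)
        by (apply Rdiv_le_0_compat; [apply Rmult_le_pos|]; lra).
      fold c A. lra.
    + intros b Hub. apply Hub. exists T. split; [lra|].
      rewrite (Lam_eq _ _ _ _ hK2). fold beta a. reflexivity.
Qed.
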